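(* Let $V$ be a finite nonempty set and $f:\{0,1\}^V\to\{0,1\}^V$ an and-net. (1) Every subnetwork of $f$ has a unique fixed point if and only if every chordless cycle of $G(f)$ has a delocalizing vertex. (2) Every subnetwork of $f$ has at most one fixed point if and only if every chordless positive cycle of $G(f)$ has a delocalizing vertex.
   Context: For nonempty $I\subseteq V$ and $z\in\{0,1\}^{V\setminus I}$, the subnetwork of $f$ induced by $z$ is $h:\{0,1\}^I\to\{0,1\}^I$ with $h(x|_I)=f(x)|_I$ for all $x$ whose restriction to $V\setminus I$ is $z$ ($f$ is a subnetwork of itself). For $x^{j\alpha}$ the point equal to $x$ except its $j$-component is $\alpha$, the global interaction graph $G(f)$ is the signed digraph on $V$ with a positive (resp. negative) arc from $j$ to $i$ iff $f_i(x^{j1})-f_i(x^{j0})=1$ (resp. $=-1$) for at least one $x$. $f$ is an and-net if $G(f)$ has at most one arc from $j$ to $i$ for all $i,j$ and for every $i$ and $x$: $f_i(x)=1$ iff $G(f)$ has no positive arc $j\to i$ with $x_j=0$ and no negative arc $j\to i$ with $x_j=1$. A cycle is a subgraph whose underlying unsigned digraph is a directed cycle (loops are cycles of length 1); positive if it has an even number of negative arcs; chordless if its underlying unsigned digraph is an induced subgraph of that of $G(f)$. A vertex $v$ (possibly on $C$) is a delocalizing vertex of a cycle $C$ if $G(f)$ has a positive arc from $v$ to a vertex of $C$ and a negative arc from $v$ to a different vertex of $C$. *)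

(* Defs.v *)
From mathcomp Require Import all_boot.
Set Implicit Arguments. Unset Strict Implicit. Unset Printing Implicit Defensive.

Section BN.
Variable V : finType.

Definition config := {ffun V -> bool}.
Definition network := config -> config.

Definition upd (x : config) (j : V) (a : bool) : config :=
  [ffun k => if k == j then a else x k].

Definition pos_arc (f : network) (j i : V) : bool :=
  [exists x : config, f (upd x j true) i && ~~ f (upd x j false) i].
Definition neg_arc (f : network) (j i : V) : bool :=
  [exists x : config, ~~ f (upd x j true) i && f (upd x j false) i].
Definition arc (f : network) (j i : V) : bool := pos_arc f j i || neg_arc f j i.

Definition and_net (f : network) : Prop :=
  (forall i j, ~~ (pos_arc f j i && neg_arc f j i)) /\
  (forall (x : config) i,
     f x i = [forall j, ~~ (pos_arc f j i && ~~ x j) && ~~ (neg_arc f j i && x j)]).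

(* Subnetworks.  For I : {set V}, points of {0,1}^I are finite functions on
   the subtype {v | v \in I}; z in {0,1}^(V \ I) is a finite function on
   {v | v \in ~: I}. *)
Definition ext (I : {set V}) (z : {ffun {v : V | v \in ~: I} -> bool})
    (y : {ffun {v : V | v \in I} -> bool}) : config :=
  [ffun v : V =>
     if @insub V (fun v => v \in I) _ v is Some u then y u
     else if @insub V (fun v => v \in ~: I) _ v is Some w then z w else false].

Definition subnet (f : network) (I : {set V})
    (z : {ffun {v : V | v \in ~: I} -> bool}) :
    {ffun {v : V | v \in I} -> bool} -> {ffun {v : V | v \in I} -> bool} :=
  fun y => [ffun u => f (ext z y) (val u)].

(* A cycle of G(f) is given by the nonempty duplicate-free sequence of its
   vertices c = [:: v0; ...; v(k-1)] with an arc v_t -> v_(t+1 mod k)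
   (loops are cycles of length 1).  In an and-net there is at most one arc
   between two vertices, so the sign of each arc is determined. *)
Definition is_cycle (f : network) (c : seq V) : bool :=
  [&& c != [::], uniq c & cycle (arc f) c].

Definition positive_cycle (f : network) (c : seq V) : bool :=
  ~~ odd (count (fun u => neg_arc f u (next c u)) c).

Definition chordless (f : network) (c : seq V) : bool :=
  [forall u, forall v, (u \in c) && (v \in c) && arc f u v ==> (v == next c u)].

Definition delocalizing (f : network) (c : seq V) (v : V) : bool :=
  [exists a, exists b, [&& a \in c, b \in c, a != b, pos_arc f v a & neg_arc f v b]].

End BN.

(* Main.v *)
Require Import Defs.
From mathcomp Require Import all_boot.
From Stdlib Require Import Classical.
Set Implicit Arguments. Unset Strict Implicit. Unset Printing Implicit Defensive.

Lemma odd_count_neq (T : eqType) (a b : pred T) s :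
  odd (count (fun u => a u != b u) s) = odd (count a s) (+) odd (count b s).
Proof.
elim: s => //= u s IH; rewrite !oddD IH.
by case: (a u); case: (b u); case: (odd (count a s)); case: (odd (count b s)).
Qed.

Lemma count_next (T : eqType) (c : seq T) (a : pred T) : uniq c ->
  count (fun u => a (next c u)) c = count a c.
Proof.
move=> Uc; transitivity (count a (map (next c) c)); first by rewrite count_map.
apply/permP; apply: uniq_perm => //.
  by rewrite map_inj_uniq //; exact: (can_inj (prev_next Uc)).
move=> x; apply/mapP/idP => [[y yc ->]|xc]; first by rewrite mem_next.
by exists (prev c x); rewrite ?mem_prev // next_prev.
Qed.

Lemma parity_cycle (T : eqType) (c : seq T) (r : pred T) : uniq c ->
  ~~ odd (count (fun u => r u != r (next c u)) c).
Proof.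
move=> Uc; have := odd_count_neq r (fun u => r (next c u)) c => /= ->.
by rewrite (count_next r Uc) addbb.
Qed.


Lemma step_gen (T : eqType) (c : seq T) (s : pred T) (b : bool) (g : T -> bool) u :
  uniq c -> u \in c -> ~~ odd (count s c) ->
  let X := fun v => if v \in c then b (+) odd (count s (take (index v c) c)) else g v in
  X (next c u) = X u (+) s u.
Proof.
move=> Uc uc Hs X.
have Etake : take (index u c).+1 c = rcons (take (index u c) c) u.
  by rewrite (take_nth u); [rewrite nth_index | rewrite index_mem].
rewrite /X (mem_next c u) uc.
case: c Uc uc Hs Etake X => [//|y c'] Uc uc Hs Etake X.
rewrite next_nth uc.
have : index u (y :: c') <= size c' by rewrite -ltnS index_mem.
rewrite leq_eqVlt => /orP[/eqP tE | tlt].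
  rewrite nth_default ?tE // /= eqxx /= addbF.
  move: Hs; rewrite -{1}(take_size (y :: c')) [size _]/= -tE Etake -cats1 count_cat /= addn0 oddD.
  by case: (s u); case: (odd _); case: b.
have -> : index (nth y c' (index u (y :: c'))) (y :: c') = (index u (y :: c')).+1.
  by rewrite -[nth y c' _]/(nth y (y :: c') (index u (y :: c')).+1) index_uniq.
by rewrite Etake -cats1 count_cat /= addn0 oddD addbA; case: (s u).
Qed.

Section Proof.
Variable V : finType.
Local Notation arc := Defs.arc.
Variable f : network V.
Hypothesis Hf : and_net f.

Definition lit (j i : V) (x : config V) : bool :=
  ~~ (pos_arc f j i && ~~ x j) && ~~ (neg_arc f j i && x j).

Lemma fE x i : f x i = [forall j, lit j i x].
Proof. by case: Hf => _ ->. Qed.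

Lemma lit_noarc j i x : ~~ arc f j i -> lit j i x.
Proof. by rewrite /arc negb_or /lit => /andP[/negbTE-> /negbTE->]. Qed.

Lemma lit_eq j i (x y : config V) : x j = y j -> lit j i x = lit j i y.
Proof. by rewrite /lit => ->. Qed.

Lemma litE j i x : arc f j i -> lit j i x = x j (+) neg_arc f j i.
Proof.
case: Hf => H _; have := H i j; rewrite /arc /lit.
by case: (pos_arc f j i); case: (neg_arc f j i); case: (x j).
Qed.

Lemma pos_neg j i : pos_arc f j i -> neg_arc f j i = false.
Proof. by case: Hf => H _; have := H i j; case: (pos_arc f j i); case: (neg_arc f j i). Qed.

Lemma fT x i : f x i -> forall j, lit j i x.
Proof. by rewrite fE => /forallP. Qed.

Lemma fF x i : f x i = false -> exists j, ~~ lit j i x.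
Proof. by rewrite fE => /negbT/forallPn. Qed.

Definition agree (I : {set V}) (x y : config V) := forall v, v \notin I -> x v = y v.
Definition fixI (I : {set V}) (x : config V) := forall i, i \in I -> f x i = x i.

Section Ext.
Variable I : {set V}.
Implicit Types (z : {ffun {v : V | v \in ~: I} -> bool}) (y : {ffun {v : V | v \in I} -> bool}).

Lemma ext_in z y (u : {v : V | v \in I}) : ext z y (val u) = y u.
Proof. by rewrite /ext ffunE valK. Qed.

Lemma ext_out z y (w : {v : V | v \in ~: I}) : ext z y (val w) = z w.
Proof.
rewrite /ext ffunE insubF; first by rewrite valK.
by have := valP w; rewrite inE => /negbTE.
Qed.

Lemma subnet_fix z y : subnet f z y = y <-> fixI I (ext z y).
Proof.
split=> [H i iI | H].
  by rewrite -[i]/(val (exist _ i iI : {v : V | v \in I})) ext_in -{2}H ffunE.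
apply/ffunP => u; rewrite ffunE H; [exact: ext_in | exact: (valP u)].
Qed.

Lemma agree_ext z y1 y2 : agree I (ext z y1) (ext z y2).
Proof.
move=> v vI; have vI' : v \in ~: I by rewrite inE.
by rewrite -[v]/(val (exist _ v vI' : {v : V | v \in ~: I})) !ext_out.
Qed.

Lemma ext_inj z y1 y2 : ext z y1 = ext z y2 -> y1 = y2.
Proof. by move=> E; apply/ffunP => u; rewrite -(ext_in z y1) -(ext_in z y2) E. Qed.

Definition zof (x : config V) : {ffun {v : V | v \in ~: I} -> bool} :=
  [ffun w => x (val w)].
Definition yof (x : config V) : {ffun {v : V | v \in I} -> bool} :=
  [ffun u => x (val u)].

Lemma ext_cfg x x0 : agree I x x0 -> ext (zof x0) (yof x) = x.
Proof.
move=> Ha; apply/ffunP => v; rewrite /ext ffunE.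
case: insubP => [u _ <-|vI]; first by rewrite ffunE.
case: insubP => [w _ <-|]; first by rewrite ffunE Ha // -(negbK (_ \in I)) -in_setC (valP w).
by rewrite inE vI.
Qed.

Lemma zof_ext z y : zof (ext z y) = z.
Proof. by apply/ffunP => w; rewrite ffunE ext_out. Qed.

End Ext.

Lemma agree_refl I x : agree I x x. Proof. by []. Qed.

Lemma agree0 x y : agree set0 x y -> x = y.
Proof. by move=> H; apply/ffunP => v; rewrite H ?inE. Qed.

Definition Uniq := forall I x1 x2, agree I x1 x2 -> fixI I x1 -> fixI I x2 -> x1 = x2.
Definition Exist := forall I x0, exists x, agree I x x0 /\ fixI I x.

Lemma Uniq_sub : Uniq <-> (forall (I : {set V}) (z : {ffun {v : V | v \in ~: I} -> bool}),
      I != set0 -> forall y1 y2, subnet f z y1 = y1 -> subnet f z y2 = y2 -> y1 = y2).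
Proof.
split=> [U I z _ y1 y2 /subnet_fix F1 /subnet_fix F2 | H I x1 x2 Ha F1 F2].
  by apply: ext_inj; apply: U F1 F2; apply: agree_ext.
have [I0|I0] := eqVneq I set0; first by apply: agree0; rewrite -I0.
have A2 : agree I x2 x1 by move=> v /Ha ->.
rewrite -(ext_cfg (@agree_refl I x1)) -(ext_cfg A2); congr ext.
by apply: (H I (zof I x1) I0); apply/subnet_fix; rewrite ?ext_cfg.
Qed.

Section Cyc.
Variable c : seq V.
Hypothesis Cc : is_cycle f c.
Hypothesis Ch : chordless f c.
Hypothesis ND : forall v, ~~ delocalizing f c v.

Definition Ic := [set u | u \in c].
Definition xc : config V := [ffun v => [exists a, (a \in c) && pos_arc f v a]].

Lemma Cuniq : uniq c. Proof. by case/and3P: Cc. Qed.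
Lemma Ccyc : cycle (arc f) c. Proof. by case/and3P: Cc. Qed.
Lemma Carc u : u \in c -> arc f u (next c u). Proof. exact: next_cycle Ccyc. Qed.

Lemma chordE u v : u \in c -> v \in c -> arc f u v -> v = next c u.
Proof.
move=> uc vc a; have := forallP Ch u => /forallP /(_ v).
by rewrite uc vc a /= => /eqP.
Qed.

Lemma Cf x : agree Ic x xc -> forall i, i \in c -> f x i = lit (prev c i) i x.
Proof.
move=> Ha i ic; rewrite fE; apply/idP/idP => [/forallP/(_ (prev c i)) // | H].
apply/forallP => j.
have [->//|ne] := eqVneq j (prev c i).
have [jc|jc] := boolP (j \in c).
  apply: lit_noarc; apply/negP => a; move/eqP: ne; apply.
  by rewrite (chordE jc ic a) prev_next //; exact: Cuniq.
have [a|na] := boolP (arc f j i); last exact: lit_noarc.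
rewrite litE // Ha ?inE // ffunE.
case/orP: (a) => [pa | na'].
  by rewrite pos_neg // addbF; apply/existsP; exists i; rewrite ic.
rewrite na' addbT; apply/negP => /existsP [b /andP[bc pb]].
have := ND j; rewrite /delocalizing => /negP; apply.
apply/existsP; exists b; apply/existsP; exists i; rewrite bc ic pb na' !andbT /=.
by apply/eqP => bi; move: pb; rewrite bi => /pos_neg; rewrite na'.
Qed.

Lemma CycNeg : ~~ positive_cycle f c -> forall x, agree Ic x xc -> ~ fixI Ic x.
Proof.
move=> Np x Ha F.
have E : {in c, forall u, neg_arc f u (next c u) = (x u != x (next c u))}.
  move=> u uc; have nc : next c u \in c by rewrite mem_next.
  have := F (next c u); rewrite inE nc => /(_ isT).
  rewrite Cf // prev_next ?Cuniq // litE ?Carc // => <-.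
  by case: (x u); case: (neg_arc _ _ _).
by move: Np; rewrite /positive_cycle (eq_in_count E) parity_cycle // Cuniq.
Qed.

Lemma CycPos : positive_cycle f c -> exists x1 x2,
  [/\ agree Ic x1 xc, agree Ic x2 xc, fixI Ic x1, fixI Ic x2 & x1 != x2].
Proof.
move=> Pc; set s := fun u => neg_arc f u (next c u).
pose X b : config V := [ffun v => if v \in c then b (+) odd (count s (take (index v c) c)) else xc v].
have St b u : u \in c -> X b (next c u) = X b u (+) s u.
  move=> uc; rewrite [X b (next c u)]ffunE [X b u]ffunE; exact: (@step_gen _ c s b xc u Cuniq uc Pc).
have Ag b : agree Ic (X b) xc by move=> v; rewrite inE ffunE => /negbTE ->.
have Fx b : fixI Ic (X b).
  move=> i; rewrite inE => ic; rewrite Cf //.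
  have pc : prev c i \in c by rewrite mem_prev.
  move: (prev c i) pc (next_prev Cuniq i) => u uc <-.
  by rewrite St // litE // Carc.
exists (X true), (X false); split => //.
have [u uc] : exists u, u \in c.
  by case/and3P: Cc; case: (c) => // u c' _ _ _; exists u; rewrite mem_head.
apply/eqP => /ffunP /(_ u); rewrite !ffunE uc; by case: (odd _).
Qed.

End Cyc.

Lemma diff_lit x y j i : lit j i x -> ~~ lit j i y -> (x j != y j) && arc f j i.
Proof.
move=> Lx Ly; apply/andP; split.
  by apply/negP => /eqP E; move: Ly; rewrite -(lit_eq i E) Lx.
by apply/negPn/negP => /(lit_noarc y); apply/negP.
Qed.

Section MinPos.
Variables (I : {set V}) (x1 x2 : config V).
Hypothesis Hd : forall v, (x1 v != x2 v) = (v \in I).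
Hypothesis F1 : fixI I x1.
Hypothesis F2 : fixI I x2.
Hypothesis M : forall J : {set V}, J \proper I -> forall y1 y2 : config V,
  agree J y1 y2 -> fixI J y1 -> fixI J y2 -> y1 = y2.

Lemma x2in v : v \in I -> x2 v = ~~ x1 v.
Proof. by rewrite -Hd; case: (x1 v); case: (x2 v). Qed.
Lemma x2out v : v \notin I -> x2 v = x1 v.
Proof. by rewrite -Hd negbK => /eqP. Qed.

Lemma cons1 j i : j \in I -> i \in I -> arc f j i -> lit j i x1 = x1 i.
Proof.
move=> jI iI a; case E: (x1 i).
  by apply: fT; rewrite F1.
have : f x2 i by rewrite F2 // x2in // E.
move/fT/(_ j); rewrite !litE // x2in //.
by case: (x1 j); case: (neg_arc _ _ _).
Qed.

Lemma out1 j i : j \notin I -> i \in I -> lit j i x1.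
Proof.
move=> jI iI; case E: (x1 i); first by apply: fT; rewrite F1.
by rewrite (lit_eq _ (esym (x2out jI))); apply: fT; rewrite F2 // x2in // E.
Qed.

Lemma innbr i : i \in I -> exists2 j, j \in I & arc f j i.
Proof.
move=> iI; case E: (x1 i).
  have : f x2 i = false by rewrite F2 // x2in // E.
  case/fF => j Lj; have := diff_lit (fT (_ : f x1 i) j) Lj.
  by rewrite F1 // E => /(_ isT) /andP[]; rewrite Hd => jI a; exists j.
have : f x1 i = false by rewrite F1.
case/fF => j Lj; have := diff_lit (fT (_ : f x2 i) j) Lj.
by rewrite F2 // x2in // E => /(_ isT) /andP[]; rewrite eq_sym Hd => jI a; exists j.
Qed.

Definition cfg (A : {set V}) : config V := [ffun v => if v \in A then x1 v else x2 v].
Definition Phi A := [set v in I | f (cfg A) v == x1 v].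

Lemma cfgE A v : cfg A v = if v \in A then x1 v else x2 v.
Proof. by rewrite ffunE. Qed.

Lemma cfg_same (A B : {set V}) w : A \subset B -> ~~ ((w \in B) && (w \notin A)) -> cfg A w = cfg B w.
Proof.
move=> AB; rewrite !cfgE; case: (boolP (w \in A)) => wA; first by rewrite (subsetP AB _ wA).
by rewrite andbT => /negbTE ->.
Qed.

Lemma Phi_sub A : Phi A \subset I.
Proof. by apply/subsetP => v; rewrite inE => /andP[]. Qed.

Lemma Phi_mono : {homo Phi : A B / A \subset B}.
Proof.
move=> A B AB; apply/subsetP => v; rewrite !inE => /andP[vI /eqP E]; rewrite vI /=; apply/eqP.
case X: (x1 v); rewrite X in E.
  rewrite fE; apply/forallP => w; have := fT E w.
  case: (boolP ((w \in B) && (w \notin A))) => [/andP[wB wA] _ | H].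
    rewrite (lit_eq _ (_ : cfg B w = x1 w)); first by apply: fT; rewrite F1.
    by rewrite cfgE wB.
  by rewrite (lit_eq _ (cfg_same AB H)).
case/fF: E => w Lw; apply/negbTE; rewrite fE; apply/forallPn; exists w.
case: (boolP ((w \in B) && (w \notin A))) => [/andP[wB wA] | H].
  have : lit w v x2 by apply: fT; rewrite F2 // x2in // X.
  by rewrite -(lit_eq _ (_ : cfg A w = x2 w)) ?(negbTE Lw) // cfgE (negbTE wA).
by rewrite -(lit_eq _ (cfg_same AB H)).
Qed.

Lemma cfg_fix A (J : {set V}) : J \subset I -> (forall v, v \in J -> (v \in Phi A) = (v \in A)) ->
  fixI J (cfg A).
Proof.
move=> JI H v vJ; have vI := subsetP JI _ vJ.
have := H v vJ; rewrite cfgE inE vI /= => <-.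
by case: eqP => // /eqP; rewrite x2in //; case: (f _ v); case: (x1 v).
Qed.

Section Indeg.
Variable i : V.
Hypothesis iI : i \in I.
Hypothesis x1i : x1 i.

Definition H1 k A := Phi (k |: A) :\ k :\ i.

Lemma H1_mono k : {homo H1 k : A B / A \subset B}.
Proof. by move=> A B AB; rewrite /H1 !setSD // Phi_mono // setUS. Qed.

Definition Lk k := fixset (H1 k).

Lemma Lk_fix k : H1 k (Lk k) = Lk k.
Proof. exact: fixsetK (H1_mono k). Qed.

Lemma Lk_sub k : Lk k \subset Phi (k |: Lk k).
Proof. by rewrite -{1}Lk_fix /H1; apply: subset_trans (subD1set _ _) (subD1set _ _). Qed.

Lemma Lk_I k : Lk k \subset I.
Proof. exact: subset_trans (Lk_sub k) (Phi_sub _). Qed.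

Lemma Lk_i k : i \notin Lk k.
Proof. by rewrite -Lk_fix /H1 !inE eqxx. Qed.

Lemma L_in j k : j \in I -> k \in I -> arc f j i -> j != k -> j \in Lk k.
Proof.
move=> jI kI aj jk; apply/negPn/negP => jL.
set y1 := cfg (k |: Lk k).
have : y1 = x1.
  apply: (M (J := I :\ k)); first by rewrite properD1.
  - move=> v; rewrite in_setD1 negb_and negbK => /orP[/eqP->|vI].
      by rewrite /y1 cfgE setU11.
    have vk : v != k by apply: contraNneq vI => ->.
    have vL : v \notin Lk k by apply: contraNN vI; apply: (subsetP (Lk_I k)).
    by rewrite /y1 cfgE in_setU1 (negbTE vk) (negbTE vL) x2out.
  - apply: cfg_fix; first exact: subD1set.
    move=> v; rewrite in_setD1 => /andP[vk vI].
    have [vi|vi] := eqVneq v i.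
      rewrite vi in_setU1 (negbTE (Lk_i k)) orbF.
      have -> : i == k = false by rewrite -vi (negbTE vk).
      rewrite inE iI /=; apply/negbTE; rewrite x1i eqb_id; apply/negP.
      move/fT/(_ j); rewrite (lit_eq i (_ : cfg (k |: Lk k) j = x2 j)); last first.
        by rewrite cfgE in_setU1 (negbTE jk) (negbTE jL).
      rewrite litE // x2in //.
      by have := cons1 jI iI aj; rewrite litE // x1i; case: (x1 j); case: (neg_arc _ _ _).
    by rewrite in_setU1 (negbTE vk) /= -{2}Lk_fix /H1 !in_setD1 (negbTE vk) vi.
  - by move=> v /setD1P[_ vI]; apply: F1.
move/ffunP/(_ j); rewrite ffunE in_setU1 (negbTE jk) (negbTE jL) /=.
by apply/eqP; rewrite eq_sym Hd.
Qed.

Lemma indeg_true j k : j \in I -> k \in I -> arc f j i -> arc f k i -> j = k.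
Proof.
move=> jI kI aj ak; apply/eqP/negPn/negP => jk.
have jL := L_in jI kI aj jk.
have kL : k \in Lk j by apply: L_in; rewrite // eq_sym.
set Y := Lk k :|: Lk j.
have Yi : i \notin Y by rewrite in_setU negb_or !Lk_i.
have YP : Y \subset Phi Y :\ i.
  apply/subsetP => v vY; rewrite in_setD1; apply/andP; split.
    by apply: contraNneq Yi => <-.
  case/setUP: vY => vL.
    apply: (subsetP (Phi_mono _)) (subsetP (Lk_sub k) _ vL).
    by rewrite subUset sub1set !inE kL orbT subsetUl.
  apply: (subsetP (Phi_mono _)) (subsetP (Lk_sub j) _ vL).
  by rewrite subUset sub1set !inE jL subsetUr.
pose H3 A := Y :|: (Phi A :\ i).
have H3m : {homo H3 : A B / A \subset B}.
  by move=> A B AB; rewrite /H3 setUS // setSD // Phi_mono.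
have HZ := fixsetK H3m; set Z := fixset H3 in HZ.
have ZG : Phi Z :\ i = Z.
  apply/eqP; rewrite eqEsubset; apply/andP; split.
    by rewrite -{2}HZ /H3 subsetUr.
  rewrite -{1}HZ /H3 subUset subxx andbT; apply: subset_trans YP _.
  by rewrite setSD // Phi_mono // -HZ subsetUl.
have : cfg Z = x2.
  apply: (M (J := I :\ i)); first by rewrite properD1.
  - move=> v; rewrite in_setD1 negb_and negbK => /orP[/eqP->|vI].
      by rewrite cfgE -ZG !inE eqxx.
    rewrite cfgE; case: ifP => // vZ; move: vI; rewrite -ZG in vZ.
    by rewrite (subsetP (Phi_sub Z) v (subsetP (subD1set _ _) _ vZ)).
  - apply: cfg_fix; first exact: subD1set.
    by move=> v /setD1P[vi _]; rewrite -{2}ZG in_setD1 vi.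
  - by move=> v /setD1P[_ vI]; apply: F2.
move/ffunP/(_ j); rewrite cfgE.
have -> : j \in Z by rewrite -HZ /H3 !inE jL.
by apply/eqP; rewrite Hd.
Qed.

End Indeg.
End MinPos.

Lemma cyc_of (I : {set V}) (q : V -> V) : I != set0 -> {in I, forall v, q v \in I} ->
  exists c : seq V, [/\ uniq c, c != [::], {subset c <= I} & {in c, forall a, q a = prev c a}].
Proof.
move=> /set0Pn [v0 v0I] qI.
have [x xI xmin] : exists2 x, x \in I & forall y, y \in I -> order q x <= order q y.
  by case: (@arg_minnP _ v0 (mem I) (order q) v0I) => y yI ymin; exists y.
have cyc : fcycle q (orbit q x).
  case: (orderPcycle q x) => // _ E.
  by have := xmin (q x) (qI _ xI); rewrite E ltnn.
have oI : {subset orbit q x <= I}.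
  move=> y; rewrite -fconnect_orbit => /iter_findex <-.
  by elim: (findex q x y) => //= n IH; apply: qI.
exists (rev (orbit q x)); split.
- by rewrite rev_uniq orbit_uniq.
- by rewrite -size_eq0 size_rev size_orbit -lt0n order_gt0.
- by move=> y; rewrite mem_rev; apply: oI.
- by move=> a; rewrite mem_rev => ao; rewrite prev_rev ?orbit_uniq // (nextE cyc ao).
Qed.

Lemma final (I : {set V}) (c : seq V) (q : V -> V) (X : config V) :
  uniq c -> c != [::] -> (forall v, (v \in c) = (v \in I)) ->
  {in c, forall a, q a = prev c a} -> {in I, forall v, arc f (q v) v} ->
  (forall u v, u \in I -> v \in I -> arc f u v -> u = q v) ->
  (forall j m, j \notin I -> m \in I -> lit j m X) ->
  [/\ is_cycle f c, chordless f c & forall v, ~~ delocalizing f c v].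
Proof.
move=> Uc c0 cI qp qa qu Xo; split.
- rewrite /is_cycle c0 Uc /=; apply: (cycle_from_prev Uc) => a ac.
  by rewrite -qp //; apply: qa; rewrite -cI.
- apply/forallP => u; apply/forallP => v; apply/implyP => /andP[/andP[uc vc] a].
  by rewrite (qu u v) -?cI // qp // next_prev.
- move=> v; apply/negP => /existsP [a /existsP [b /and5P[ac bc ab pa nb]]].
  have [vI|vI] := boolP (v \in I).
    have aa : arc f v a by rewrite /arc pa.
    have ab' : arc f v b by rewrite /arc nb orbT.
    have E : prev c a = prev c b by rewrite -!qp // -(qu _ _ vI _ aa) -?cI // -(qu _ _ vI _ ab') -?cI.
    by move: ab; rewrite (can_inj (next_prev Uc) E) eqxx.
  have la := Xo v a vI; rewrite -cI ac in la; have {}la := la isT.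
  have lb := Xo v b vI; rewrite -cI bc in lb; have {}lb := lb isT.
  rewrite litE ?pos_neg // ?addbF in la; last by rewrite /arc pa.
  by rewrite litE ?nb ?la // /arc nb orbT in lb.
Qed.

Section PosCycle.
Variables (I : {set V}) (x1 x2 : config V).
Hypothesis Hd : forall v, (x1 v != x2 v) = (v \in I).
Hypothesis F1 : fixI I x1.
Hypothesis F2 : fixI I x2.
Hypothesis M : forall J : {set V}, J \proper I -> forall y1 y2 : config V,
  agree J y1 y2 -> fixI J y1 -> fixI J y2 -> y1 = y2.
Hypothesis I0 : I != set0.

Lemma indeg i j k : i \in I -> j \in I -> k \in I -> arc f j i -> arc f k i -> j = k.
Proof.
move=> iI jI kI aj ak; case X: (x1 i).
  exact: (indeg_true Hd F1 F2 M iI X jI kI aj ak).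
have Hd' : forall v, (x2 v != x1 v) = (v \in I) by move=> v; rewrite eq_sym Hd.
have X' : x2 i by rewrite (x2in Hd iI) X.
exact: (indeg_true Hd' F2 F1 M iI X' jI kI aj ak).
Qed.

Definition pp (v : V) := odflt v [pick j in I | arc f j v].

Lemma pp_spec v : v \in I -> (pp v \in I) && arc f (pp v) v.
Proof.
move=> vI; rewrite /pp; case: pickP => [j /andP[-> ->] //|none].
by case: (innbr Hd F1 F2 vI) => j jI a; have := none j; rewrite jI a.
Qed.

Lemma PosGood : exists c, [/\ is_cycle f c, positive_cycle f c, chordless f c &
  forall v, ~~ delocalizing f c v].
Proof.
have ppI : {in I, forall v, pp v \in I} by move=> v /pp_spec /andP[].
have ppa : {in I, forall v, arc f (pp v) v} by move=> v /pp_spec /andP[].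
have ppu u v : u \in I -> v \in I -> arc f u v -> u = pp v.
  move=> uI vI a; apply: (indeg vI uI (ppI v vI) a (ppa v vI)).
have [c [Uc c0 cI cp]] := cyc_of I0 ppI.
have cov : forall v, (v \in c) = (v \in I).
  move=> v; apply/idP/idP => [/cI //|vI]; apply/negPn/negP => vc.
  set T := [set u | u \in c].
  pose y2 : config V := [ffun u => if u \in T then x2 u else x1 u].
  have TI : T \subset I by apply/subsetP => u; rewrite inE; apply: cI.
  have : x1 = y2.
    apply: (M (J := T)).
    - by rewrite properEneq TI andbT; apply/eqP => TE; move: vI; rewrite -TE inE (negbTE vc).
    - by move=> u uT; rewrite ffunE (negbTE uT).
    - by move=> u uT; apply: F1; apply: (subsetP TI).
    - move=> t tT; rewrite [y2 t]ffunE tT -F2 ?(subsetP TI) // !fE.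
      apply: eq_forallb => j; have [a|na] := boolP (arc f j t); last by rewrite !lit_noarc.
      apply: lit_eq; rewrite ffunE; case: ifP => // jT.
      have [jI|jI] := boolP (j \in I); last by rewrite (x2out Hd jI).
      have tc : t \in c by rewrite inE in tT.
      by move: jT; rewrite (ppu _ _ jI (subsetP TI _ tT) a) (cp _ tc) inE mem_prev tc.
  have [u uc] : exists u, u \in c by case: (c) c0 => // u c' _; exists u; rewrite mem_head.
  move/ffunP/(_ u); rewrite ffunE inE uc; apply/eqP; rewrite Hd; exact: cI.
have [Cc Ch ND] := final Uc c0 cov cp ppa ppu (out1 Hd F1 F2).
exists c; split => //.
have E : {in c, forall u, neg_arc f u (next c u) = (x1 u != x1 (next c u))}.
  move=> u uc; have nc : next c u \in c by rewrite mem_next.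
  have a : arc f u (next c u) by apply: next_cycle uc; case/and3P: Cc.
  have := cons1 Hd F1 F2 (cI _ uc) (cI _ nc) a; rewrite litE // => <-.
  by case: (x1 u); case: (neg_arc _ _ _).
by rewrite /positive_cycle (eq_in_count E) parity_cycle.
Qed.

End PosCycle.

Section MinNeg.
Variables (I : {set V}) (x0 : config V).
Hypothesis U : Uniq.
Hypothesis Hno : forall x, agree I x x0 -> ~ fixI I x.
Hypothesis Mex : forall J : {set V}, J \proper I -> forall y0 : config V,
  exists y, agree J y y0 /\ fixI J y.

Definition base v (b : bool) : config V := [ffun w => if w == v then b else x0 w].

Definition AV v (a0 a1 : config V) := [/\ agree (I :\ v) a0 (base v false),
  fixI (I :\ v) a0, agree (I :\ v) a1 (base v true) & fixI (I :\ v) a1].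

Lemma AV_ex v : v \in I -> exists a0 a1, AV v a0 a1.
Proof.
move=> vI; have P := properD1 vI.
case: (Mex P (base v false)) => a0 [? ?]; case: (Mex P (base v true)) => a1 [? ?].
by exists a0, a1.
Qed.

Section OneV.
Variables (v : V) (a0 a1 : config V).
Hypothesis vI : v \in I.
Hypothesis HA : AV v a0 a1.

Lemma a_val : a0 v = false /\ a1 v = true.
Proof.
case: HA => A0 _ A1 _.
by rewrite A0 ?A1 ?ffunE ?eqxx // !inE eqxx.
Qed.

Lemma a_out w : w \notin I -> a0 w = x0 w /\ a1 w = x0 w.
Proof.
move=> wI; case: HA => A0 _ A1 _.
have wv : (w == v) = false by apply/negbTE; apply: contraNneq wI => ->.
have wI' : w \notin I :\ v by rewrite in_setD1 negb_and wI orbT.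
by rewrite A0 // A1 // !ffunE wv.
Qed.

Lemma fix_a a : agree (I :\ v) a (base v (a v)) -> fixI (I :\ v) a -> f a v <> a v.
Proof.
move=> Ag Fa E; apply: (Hno (x := a)).
  move=> w wI; have wI' : w \notin I :\ v by rewrite in_setD1 negb_and wI orbT.
  have wv : (w == v) = false by apply/negbTE; apply: contraNneq wI => ->.
  by rewrite Ag // ffunE wv.
move=> i iI; have [->//|iv] := eqVneq i v.
by apply: Fa; rewrite in_setD1 iv.
Qed.

Lemma fa0 : f a0 v = true.
Proof.
case: HA => A0 F0 _ _; have [av _] := a_val.
case E: (f a0 v) => //; exfalso.
by apply: (@fix_a a0); [rewrite av; exact: A0 | exact: F0 | rewrite E av].
Qed.

Lemma fa1 : f a1 v = false.
Proof.
case: HA => _ _ A1 F1; have [_ av] := a_val.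
case E: (f a1 v) => //; exfalso.
by apply: (@fix_a a1); [rewrite av; exact: A1 | exact: F1 | rewrite E av].
Qed.

Lemma a_diff w : w \in I -> a0 w != a1 w.
Proof.
move=> wI; apply/negP => /eqP Ew.
case: HA => A0 F0 A1 F1; have [av0 av1] := a_val.
set D := [set u | a0 u != a1 u].
have DI : D \subset I.
  apply/subsetP => u; rewrite inE; apply: contraR => uI.
  by have [-> ->] := a_out uI.
have vD : v \in D by rewrite inE av0 av1.
have Dp : D \proper I.
  by rewrite properE DI /=; apply/subsetPn; exists w => //; rewrite inE Ew eqxx.
case: (Mex Dp a0) => x [Ax Fx].
have Ex : x = if x v then a1 else a0.
  apply: (U (I := D :\ v)).
  - move=> u; rewrite in_setD1 negb_and negbK => /orP[/eqP->|uD].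
      by case: (x v); rewrite ?av0 ?av1.
    rewrite Ax //; move: uD; rewrite inE negbK => /eqP E.
    by case: (x v).
  - by move=> u /setD1P[_ uD]; apply: Fx.
  - have S : D :\ v \subset I :\ v by rewrite setSD.
    by case: (x v) => u /(subsetP S) uI; [apply: F1 | apply: F0].
have := Fx v vD; rewrite {1}Ex; case E: (x v).
  by rewrite fa1.
by rewrite fa0.
Qed.

Lemma a_cons j m : j \in I -> m \in I -> arc f j m -> lit j m a0 = a0 m (+) (m == v).
Proof.
move=> jI mI a; have [av0 av1] := a_val.
have [->|mv] := eqVneq m v.
  by rewrite av0 /=; apply: fT fa0 j.
case: HA => A0 F0 A1 F1.
have mI' : m \in I :\ v by rewrite in_setD1 mv.
rewrite addbF; case E: (a0 m); first by apply: fT; rewrite F0.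
have E1 : a1 m by have := a_diff mI; rewrite E; case: (a1 m).
have := fT (_ : f a1 m) j; rewrite F1 // => /(_ E1).
rewrite !litE //; have := a_diff jI.
by case: (a0 j); case: (a1 j); case: (neg_arc _ _ _).
Qed.

Lemma a_out_lit j m : j \notin I -> m \in I -> lit j m a0.
Proof.
move=> jI mI; have [->|mv] := eqVneq m v; first exact: fT fa0 j.
case: HA => A0 F0 A1 F1.
have mI' : m \in I :\ v by rewrite in_setD1 mv.
case E: (a0 m); first by apply: fT; rewrite F0.
have E1 : a1 m by have := a_diff mI; rewrite E; case: (a1 m).
have [o0 o1] := a_out jI.
rewrite (lit_eq m (_ : a0 j = a1 j)); last by rewrite o0 o1.
by apply: fT; rewrite F1.
Qed.

Lemma a_innbr : exists2 j, j \in I & arc f j v.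
Proof.
case/fF: fa1 => j Lj; have /andP[dj a] := diff_lit (fT fa0 j) Lj.
exists j => //; apply: contraR dj => jI.
by have [-> ->] := a_out jI.
Qed.

End OneV.

Lemma cover (c : seq V) (q : V -> V) : uniq c -> {subset c <= I} ->
  {in c, forall a, q a = prev c a} -> {in I, forall v, arc f (q v) v} ->
  (exists u, u \in c) -> forall w, (w \in c) = (w \in I).
Proof.
move=> Uc cI cp qa [v vc] w; apply/idP/idP => [/cI //|wI].
apply/negPn/negP => wc.
have vI := cI v vc.
have vw : (w == v) = false by apply/negbTE; apply: contraNneq wc => ->.
have [av [av' Hv]] := AV_ex vI; have [aw [aw' Hw]] := AV_ex wI.
pose r u := av u (+) aw u.
have key j m : j \in I -> m \in I -> arc f j m -> r j (+) r m = (m == v) (+) (m == w).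
  move=> jI mI a; have := a_cons vI Hv jI mI a; have := a_cons wI Hw jI mI a.
  rewrite /r !litE //.
  by case: (av j); case: (aw j); case: (av m); case: (aw m);
     case: (neg_arc _ _ _); case: (m == v); case: (m == w).
have E : {in c, forall u, (r u != r (next c u)) = (u == prev c v)}.
  move=> u uc; have mc : next c u \in c by rewrite mem_next.
  have mw : (next c u == w) = false by apply/negbTE; apply: contraNneq wc => <-.
  have a : arc f u (next c u).
    by have := qa _ (cI _ mc); rewrite cp // prev_next.
  have := key _ _ (cI _ uc) (cI _ mc) a; rewrite mw addbF -(can2_eq (prev_next Uc) (next_prev Uc)).
  by move=> <-; case: (r u); case: (r _).
have := parity_cycle r Uc; rewrite (eq_in_count E).
by rewrite (count_uniq_mem _ Uc) mem_prev vc.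
Qed.

Definition pn (v : V) := odflt v [pick j in I | arc f j v].

Lemma pn_spec v : v \in I -> (pn v \in I) && arc f (pn v) v.
Proof.
move=> vI; rewrite /pn; case: pickP => [j /andP[-> ->] //|none].
have [a0 [a1 HA]] := AV_ex vI.
by case: (a_innbr vI HA) => j jI a; have := none j; rewrite jI a.
Qed.

Lemma NegGood : exists c, [/\ is_cycle f c, chordless f c &
  forall v, ~~ delocalizing f c v].
Proof.
have I0 : I != set0.
  by apply/negP => /eqP I0; apply: (Hno (x := x0)) => // i; rewrite I0 inE.
have pnI : {in I, forall v, pn v \in I} by move=> v /pn_spec /andP[].
have pna : {in I, forall v, arc f (pn v) v} by move=> v /pn_spec /andP[].
have [c [Uc c0 cI cp]] := cyc_of I0 pnI.
have ex (c' : seq V) : c' != [::] -> exists u, u \in c' by case: c' => // u c' _; exists u; rewrite mem_head.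
have cov := cover Uc cI cp pna (ex c c0).
have pnu u v : u \in I -> v \in I -> arc f u v -> u = pn v.
  move=> uI vI a; apply/eqP/negPn/negP => upn.
  pose q t := if t == v then u else pn t.
  have qI : {in I, forall t, q t \in I} by move=> t tI; rewrite /q; case: eqP => // _; apply: pnI.
  have qa : {in I, forall t, arc f (q t) t}.
    by move=> t tI; rewrite /q; case: eqP => [->//|_]; apply: pna.
  have [c' [Uc' c0' cI' cp']] := cyc_of I0 qI.
  have cov' := cover Uc' cI' cp' qa (ex c' c0').
  set w := next c u.
  have wc : w \in c by rewrite mem_next cov.
  have pw : pn w = u by rewrite cp // prev_next.
  have wv : w != v by apply: contraNneq upn => <-; rewrite pw.
  have : q w = q v by rewrite /q eqxx (negbTE wv).
  rewrite !cp' ?cov' ?(cI _ wc) // => /(can_inj (next_prev Uc')) E.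
  by move: wv; rewrite E eqxx.
have [v0 v0I] := set0Pn _ I0.
have [a0 [a1 HA]] := AV_ex v0I.
by exists c; exact: final Uc c0 cov cp pna pnu (a_out_lit v0I HA).
Qed.

End MinNeg.

Lemma Pos_uniq : (forall c, is_cycle f c -> positive_cycle f c -> chordless f c ->
  exists v, delocalizing f c v) -> Uniq.
Proof.
move=> Hc.
suff H : forall n (I : {set V}) x1 x2, #|I| <= n -> agree I x1 x2 -> fixI I x1 -> fixI I x2 -> x1 = x2.
  rewrite /Uniq => I x1 x2; exact: H (leqnn #|I|).
elim=> [|n IH] I x1 x2 HI Ha F1 F2.
  move: HI; rewrite leqn0 cards_eq0 => /eqP I0; apply: agree0; by rewrite -I0.
apply/eqP/negPn/negP => ne.
set D := [set v | x1 v != x2 v].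
have DI : D \subset I.
  by apply/subsetP => v; rewrite inE; apply: contraR => vI; rewrite Ha.
have D0 : D != set0.
  apply/set0Pn; apply/existsP; apply: contraR ne => /existsPn H.
  by apply/eqP/ffunP => v; have := H v; rewrite inE negbK => /eqP.
have [Dp|Dp] := boolP (D \proper I).
  move/eqP: ne; apply; apply: (IH D) => //.
  - by rewrite -ltnS; apply: leq_trans (proper_card Dp) HI.
  - by move=> v; rewrite inE negbK => /eqP.
  - by move=> v /(subsetP DI); apply: F1.
  - by move=> v /(subsetP DI); apply: F2.
have DeI : D = I by apply/eqP; move: Dp; rewrite properEneq DI andbT negbK.
have Hd : forall v, (x1 v != x2 v) = (v \in I) by move=> v; rewrite -DeI inE.
have M : forall J : {set V}, J \proper I -> forall y1 y2 : config V,
    agree J y1 y2 -> fixI J y1 -> fixI J y2 -> y1 = y2.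
  move=> J JI y1 y2; apply: IH.
  by rewrite -ltnS; apply: leq_trans (proper_card JI) HI.
have I0 : I != set0 by rewrite -DeI.
have [c [Cc Pc Ch ND]] := PosGood Hd F1 F2 M I0.
by have [v] := Hc c Cc Pc Ch; apply/negP.
Qed.

Lemma Neg_exist : Uniq -> (forall c, is_cycle f c -> chordless f c ->
  exists v, delocalizing f c v) -> Exist.
Proof.
move=> U Hc.
suff H : forall n (I : {set V}) x0, #|I| <= n -> exists x, agree I x x0 /\ fixI I x.
  rewrite /Exist => I x0; exact: H (leqnn #|I|).
elim=> [|n IH] I x0 HI.
  exists x0; split=> // i; move: HI; rewrite leqn0 cards_eq0 => /eqP ->.
  by rewrite inE.
case: (classic (exists x, agree I x x0 /\ fixI I x)) => // Hn.
have Hno : forall x, agree I x x0 -> ~ fixI I x by move=> x A F; apply: Hn; exists x.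
have Mex : forall J : {set V}, J \proper I -> forall y0 : config V,
    exists y, agree J y y0 /\ fixI J y.
  move=> J JI y0; apply: IH.
  by rewrite -ltnS; apply: leq_trans (proper_card JI) HI.
have [c [Cc Ch ND]] := NegGood U Hno Mex.
by have [v Dv] := Hc c Cc Ch; move: (ND v); rewrite Dv.
Qed.

Lemma Exist_sub : Exist -> forall (I : {set V}) (z : {ffun {v : V | v \in ~: I} -> bool}),
  exists y, subnet f z y = y.
Proof.
move=> Ex I z; have [x [Ax Fx]] := Ex I (ext z [ffun _ => false]).
exists (yof I x); apply/subnet_fix.
by have := ext_cfg Ax; rewrite zof_ext => ->.
Qed.

Lemma sub_Exist : (forall (I : {set V}) (z : {ffun {v : V | v \in ~: I} -> bool}),
  I != set0 -> exists y, subnet f z y = y) -> Exist.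
Proof.
move=> H I x0; have [I0|I0] := eqVneq I set0.
  by exists x0; split=> // i; rewrite I0 inE.
have [y /subnet_fix Fy] := H I (zof I x0) I0.
exists (ext (zof I x0) y); split => //.
move=> v vI; rewrite -{2}(ext_cfg (@agree_refl I x0)); exact: agree_ext.
Qed.

Lemma main_sec :
  ((forall (I : {set V}) (z : {ffun {v : V | v \in ~: I} -> bool}),
      I != set0 -> exists! y, subnet f z y = y)
   <-> (forall c : seq V, is_cycle f c -> chordless f c ->
          exists v, delocalizing f c v))
  /\
  ((forall (I : {set V}) (z : {ffun {v : V | v \in ~: I} -> bool}),
      I != set0 -> forall y1 y2, subnet f z y1 = y1 -> subnet f z y2 = y2 -> y1 = y2)
   <-> (forall c : seq V, is_cycle f c -> positive_cycle f c -> chordless f c ->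
          exists v, delocalizing f c v)).
Proof.
have PosC : Uniq -> forall c, is_cycle f c -> positive_cycle f c -> chordless f c ->
    exists v, delocalizing f c v.
  move=> U c Cc P Ch.
  case: (boolP [exists v, delocalizing f c v]) => [/existsP//|/existsPn ND].
  have [x1 [x2 [A1 A2 F1 F2 ne]]] := CycPos Cc Ch ND P.
  by move/eqP: ne; case; apply: (U (Ic c)) => // v vI; rewrite A1 ?A2.
split; split.
- move=> H c Cc Ch.
  have U : Uniq.
    apply/Uniq_sub => I z I0 y1 y2 E1 E2.
    by case: (H I z I0) => y [_ Hy]; rewrite -(Hy y1 E1) -(Hy y2 E2).
  have Ex := sub_Exist (fun I z I0 => match H I z I0 with ex_intro y (conj Hy _) => ex_intro _ y Hy end).
  case: (boolP (positive_cycle f c)) => P; first exact: PosC.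
  case: (boolP [exists v, delocalizing f c v]) => [/existsP//|/existsPn ND].
  have [x [Ax Fx]] := Ex (Ic c) (xc c).
  by case: (CycNeg Cc Ch ND P Ax Fx).
- move=> Hc I z I0.
  have U := Pos_uniq (fun c C P Ch => Hc c C Ch).
  have Ex := Neg_exist U Hc.
  have [y Hy] := Exist_sub Ex z.
  exists y; split => // y' Hy'.
  exact: (proj1 Uniq_sub U I z I0).
- by move=> H; apply: PosC; apply/Uniq_sub.
- by move=> Hc; apply/Uniq_sub; apply: Pos_uniq.
Qed.

End Proof.

Unset Implicit Arguments.

Theorem corollary12 (V : finType) (HV : 0 < #|V|) (f : network V) :
  and_net f ->
  ((forall (I : {set V}) (z : {ffun {v : V | v \in ~: I} -> bool}),
      I != set0 -> exists! y, subnet f z y = y)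
   <-> (forall c : seq V, is_cycle f c -> chordless f c ->
          exists v, delocalizing f c v))
  /\
  ((forall (I : {set V}) (z : {ffun {v : V | v \in ~: I} -> bool}),
      I != set0 -> forall y1 y2, subnet f z y1 = y1 -> subnet f z y2 = y2 -> y1 = y2)
   <-> (forall c : seq V, is_cycle f c -> positive_cycle f c -> chordless f c ->
          exists v, delocalizing f c v)).
Proof. move=> Hf; exact: main_sec Hf. Qed.
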